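(* For each $\lambda\in K^*$, the algebras $T(\lambda^{-2})$ and $\Sigma(\lambda)$ are isomorphic.
   Context: $K$ is an algebraically closed field; paths composed left to right. For a triangulation quiver $(Q,f)$ (finite connected quiver, $\ge2$ vertices, exactly two arrows start and two end at each vertex, $f$ a permutation of arrows with $s(f(\alpha))=t(\alpha)$, $f^3=\mathrm{id}$), $\bar\alpha$ is the other arrow with source $s(\alpha)$, $g(\alpha)=\overline{f(\alpha)}$, $n_\alpha$ the $g$-orbit length; with weights $m_\alpha$ and parameters $c_\alpha\in K^*$ constant on $g$-orbits, $A_\alpha=\alpha g(\alpha)\cdots g^{m_\alpha n_\alpha-2}(\alpha)$; $\alpha$ virtual if $m_\alpha n_\alpha=2$. The weighted surface algebra is $KQ/I$, $I$ generated by $\alpha f(\alpha)-c_{\bar\alpha}A_{\bar\alpha}$ (all $\alpha$), $\alpha f(\alpha)g(f(\alpha))$ ($f^2(\alpha)$ not virtual), $\alpha g(\alpha)f(g(\alpha))$ ($f(\alpha)$ not virtual). $T(\mu)$ ($\mu\in K^*$): vertices $1,2,3$; arrows $\alpha_1:1\to2,\alpha_2:2\to3,\alpha_3:3\to1,\beta_1:2\to1,\beta_2:3\to2,\beta_3:1\to3$; $f=(\alpha_1\,\alpha_2\,\alpha_3)(\beta_1\,\beta_3\,\beta_2)$; weights $2,2,1$ and parameters $\mu,1,1$ on the $g$-orbits $(\alpha_1\,\beta_1),(\alpha_2\,\beta_2),(\alpha_3\,\beta_3)$. $\Sigma(\lambda)$: vertices $1,2,3$; arrows $\alpha:1\to1$,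 $\beta:1\to2$, $\gamma:2\to1$, $\sigma:2\to3$, $\delta:3\to2$, $\eta:3\to3$; $f=(\alpha\,\beta\,\gamma)(\eta\,\delta\,\sigma)$ (so $g$-orbits $(\alpha),(\beta\,\sigma\,\delta\,\gamma),(\eta)$); weights $2,1,2$ and parameters $1,\lambda,1$ on these orbits respectively. *)

(* Defs.v *)
From HB Require Import structures.
From mathcomp Require Import all_boot all_order all_algebra.
From mathcomp Require Import monalg.
Set Implicit Arguments. Unset Strict Implicit. Unset Printing Implicit Defensive.
Import Order.TTheory GRing.Theory Num.Theory.
Local Open Scope ring_scope.

Inductive gen_ideal (R : pzRingType) (P : R -> Prop) : R -> Prop :=
| gi_gen r : P r -> gen_ideal P r
| gi_0 : gen_ideal P 0
| gi_add x y : gen_ideal P x -> gen_ideal P y -> gen_ideal P (x + y)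
| gi_mull a x : gen_ideal P x -> gen_ideal P (a * x)
| gi_mulr x a : gen_ideal P x -> gen_ideal P (x * a).

Definition FreeAlg (K : fieldType) (V A : finType) :=
  {malg K[{fmonom (V + A)%type}]}.

Section PathAlgebra.
Variables (K : fieldType) (V A : finType) (s t : A -> V).
Local Notation F := (FreeAlg K V A).

Definition vtx (v : V) : F := << fmu (inl v : (V + A)%type) >>.
Definition arr (a : A) : F := << fmu (inr a : (V + A)%type) >>.
(* the path a_1 a_2 ... a_k (composed left to right) *)
Definition pth (w : seq A) : F := \prod_(b <- w) arr b.

(* relations presenting the path algebra KQ as a quotient of K<V + A>:
   e_v e_w = delta_{vw} e_v, sum_v e_v = 1, e_{s(a)} a = a = a e_{t(a)} *)
Definition quiver_rel (x : F) : Prop :=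
  (exists v w, x = vtx v * vtx w - (v == w)%:R * vtx v)
  \/ x = \sum_v vtx v - 1
  \/ (exists a, x = vtx (s a) * arr a - arr a)
  \/ (exists a, x = arr a * vtx (t a) - arr a).
End PathAlgebra.

Section WSA.
Variables (K : fieldType) (V A : finType) (s t : A -> V) (f : A -> A)
          (m : A -> nat) (c : A -> K).
Local Notation F := (FreeAlg K V A).

Definition bar (a : A) : A := odflt a [pick b | (s b == s a) && (b != a)].
Definition gperm (a : A) : A := bar (f a).
Definition norb (a : A) : nat := order gperm a.
Definition Apath (a : A) : F :=
  pth K V [seq iter i gperm a | i <- iota 0 (m a * norb a - 1)].
Definition virtual (a : A) : bool := m a * norb a == 2.

Definition wsa_rel (x : F) : Prop :=
  quiver_rel s t x
  \/ (exists a, x = arr K V a * arr K V (f a) - c (bar a) *: Apath (bar a))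
  \/ (exists a, ~~ virtual (f (f a)) /\
        x = arr K V a * arr K V (f a) * arr K V (gperm (f a)))
  \/ (exists a, ~~ virtual (f a) /\
        x = arr K V a * arr K V (gperm a) * arr K V (f (gperm a))).

(* the ideal of KQ + path-algebra relations; KQ/I = FreeAlg / wsa_ideal *)
Definition wsa_ideal : F -> Prop := gen_ideal wsa_rel.
End WSA.

(* ---------- isomorphism of quotient algebras F1/J1 ~ F2/J2, expressed on
   representatives: algebra maps in both directions that respect the ideals
   and induce mutually inverse maps on the quotients. *)
Definition quot_alg_iso (K : fieldType) (F1 F2 : lalgType K)
    (J1 : F1 -> Prop) (J2 : F2 -> Prop) : Prop :=
  exists (phi : {lrmorphism F1 -> F2}) (psi : {lrmorphism F2 -> F1}),
    [/\ forall x, J1 x -> J2 (phi x),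
        forall y, J2 y -> J1 (psi y),
        forall x, J1 (psi (phi x) - x)
      & forall y, J2 (phi (psi y) - y)].

(* ---------- the two concrete algebras; vertices 1,2,3 are 0,1,2 in 'I_3 *)
Definition tab3 (l : seq nat) (i : 'I_6) : 'I_3 := inord (nth 0%N l i).
Definition tab6 (l : seq nat) (i : 'I_6) : 'I_6 := inord (nth 0%N l i).
Definition tabn (l : seq nat) (i : 'I_6) : nat := nth 0%N l i.
Definition tabK (K : fieldType) (l : seq K) (i : 'I_6) : K := nth 1 l i.

(* T(mu): arrows 0..5 = alpha1 alpha2 alpha3 beta1 beta2 beta3 *)
Definition T_s := tab3 [:: 0; 1; 2; 1; 2; 0]%N.
Definition T_t := tab3 [:: 1; 2; 0; 0; 1; 2]%N.
Definition T_f := tab6 [:: 1; 2; 0; 5; 3; 4]%N.   (* (a1 a2 a3)(b1 b3 b2) *)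
Definition T_m := tabn [:: 2; 2; 1; 2; 2; 1]%N.   (* orbits (a1 b1),(a2 b2),(a3 b3) *)
Definition T_c (K : fieldType) (mu : K) := tabK [:: mu; 1; 1; mu; 1; 1].
Definition T_ideal (K : fieldType) (mu : K) :=
  wsa_ideal T_s T_t T_f T_m (T_c mu).

(* Sigma(lambda): arrows 0..5 = alpha beta gamma sigma delta eta *)
Definition S_s := tab3 [:: 0; 0; 1; 1; 2; 2]%N.
Definition S_t := tab3 [:: 0; 1; 0; 2; 1; 2]%N.
Definition S_f := tab6 [:: 1; 2; 0; 5; 3; 4]%N.   (* (alpha beta gamma)(eta delta sigma) *)
Definition S_m := tabn [:: 2; 1; 1; 1; 1; 2]%N.   (* orbits (alpha),(beta sigma delta gamma),(eta) *)
Definition S_c (K : fieldType) (lam : K) := tabK [:: 1; lam; lam; lam; lam; 1].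
Definition S_ideal (K : fieldType) (lam : K) :=
  wsa_ideal S_s S_t S_f S_m (S_c lam).

(* Main.v *)
Require Import Defs.
From HB Require Import structures.
From mathcomp Require Import all_boot all_order all_algebra.
From mathcomp Require Import monalg.
From mathcomp.algebra_tactics Require Import ring.
From Stdlib Require Import FunctionalExtensionality Setoid Morphisms.
Set Implicit Arguments. Unset Strict Implicit. Unset Printing Implicit Defensive.
Import GRing.Theory.
Local Open Scope ring_scope.

Section Ev.
Variables (K : fieldType) (I J : choiceType).
Local Notation S := {malg K[{fmonom J}]}.
Local Notation F := {malg K[{fmonom I}]}.
Variable gen : I -> S.

Lemma malgC_comm (c : K) (x : S) : x * c%:A = c *: x.
Proof.
have -> : c%:A = c%:MP :> S by rewrite -mul_malgC mulr1.
rewrite -mul_malgC [x]monalgE mulr_suml mulr_sumr; apply: eq_bigr => k _.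
by rewrite !malgM_def !fgmulUU mulm1 mul1m mulrC.
Qed.

Definition hmon (m : {fmonom I}) : S := \prod_(i <- fmonom_val m) gen i.

Lemma hmon_mmorph : mmorphism hmon.
Proof.
split; last by rewrite /hmon fm1 big_nil.
by move=> m1 m2; rewrite /hmon fmM big_cat.
Qed.

HB.instance Definition _ := isMultiplicative.Build _ _ hmon hmon_mmorph.

Definition ev (x : F) : S := mmap (in_alg S) hmon x.

Lemma ev_is_additive : additive ev.
Proof. exact: mmap_is_additive. Qed.
HB.instance Definition _ := GRing.isAdditive.Build F S ev ev_is_additive.

Lemma ev_is_multiplicative : multiplicative ev.
Proof.
apply: commr_mmap_is_multiplicative => g m m'.
by rewrite /GRing.comm /= malgC_comm mulr_algl.
Qed.
HB.instance Definition _ := GRing.isMultiplicative.Build F S ev ev_is_multiplicative.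

Lemma ev_is_scalable : scalable ev.
Proof. by move=> c x; rewrite /ev mmapZ /= mulr_algl. Qed.
HB.instance Definition _ := GRing.isScalable.Build K F S *:%R ev ev_is_scalable.

Definition evL : {lrmorphism F -> S} := ev.

Lemma evB x y : ev (x - y) = ev x - ev y. Proof. exact: raddfB. Qed.
Lemma evD x y : ev (x + y) = ev x + ev y. Proof. exact: raddfD. Qed.
Lemma evM x y : ev (x * y) = ev x * ev y. Proof. exact: rmorphM. Qed.
Lemma evZ k x : ev (k *: x) = k *: ev x. Proof. exact: ev_is_scalable. Qed.
Lemma ev1 : ev 1 = 1. Proof. exact: rmorph1. Qed.
Lemma ev0 : ev 0 = 0. Proof. exact: raddf0. Qed.

Lemma ev_nat n : ev n%:R = n%:R. Proof. exact: rmorph_nat. Qed.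
Lemma ev_sum (T : Type) (r : seq T) (Pr : pred T) (G : T -> F) :
  ev (\sum_(i <- r | Pr i) G i) = \sum_(i <- r | Pr i) ev (G i).
Proof. exact: raddf_sum. Qed.

Lemma malg_ind (Q : F -> Prop) : Q 0 -> (forall x y, Q x -> Q y -> Q (x + y)) ->
  (forall (k : K) x, Q x -> Q (k *: x)) -> (forall x y, Q x -> Q y -> Q (x * y)) ->
  Q 1 -> (forall i, Q << fmu i >>) -> forall x, Q x.
Proof.
move=> Q0 QD QZ QM Q1 Qg x; rewrite [x]monalgE.
apply: big_ind => // m _.
have -> : << x@_m *g m >> = x@_m *: (<< m >> : F).
  by rewrite -mul_malgC malgM_def fgmulUU mulr1 mul1m.
apply: QZ; case: m => s; elim: s => [|i s IH].
  have -> : FMonom [::] = (mone : {fmonom I}) by apply: val_inj; rewrite /= fm1.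
  by rewrite (_ : (<< mone >> : F) = 1) // -mpolyC1E.
have -> : FMonom (i :: s) = mmul (fmu i) (FMonom s).
  by apply: val_inj; rewrite /= fmM fmU.
have -> : << mmul (fmu i) (FMonom s) >> = << fmu i >> * (<< FMonom s >> : F).
  by rewrite malgM_def fgmulUU mulr1.
by apply: QM.
Qed.

Lemma ev_gen i : ev << fmu i >> = gen i.
Proof. by rewrite /ev mmapU /= scale1r mul1r /hmon fmU big_seq1. Qed.

End Ev.
Definition o0 : 'I_6 := @Ordinal 6 0 isT.
Definition o1 : 'I_6 := @Ordinal 6 1 isT.
Definition o2 : 'I_6 := @Ordinal 6 2 isT.
Definition o3 : 'I_6 := @Ordinal 6 3 isT.
Definition o4 : 'I_6 := @Ordinal 6 4 isT.
Definition o5 : 'I_6 := @Ordinal 6 5 isT.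
Definition v0 : 'I_3 := @Ordinal 3 0 isT.
Definition v1 : 'I_3 := @Ordinal 3 1 isT.
Definition v2 : 'I_3 := @Ordinal 3 2 isT.

Lemma ord6P (P : 'I_6 -> Prop) :
  P o0 -> P o1 -> P o2 -> P o3 -> P o4 -> P o5 -> forall a, P a.
Proof.
move=> H0 H1 H2 H3 H4 H5 [[|[|[|[|[|[|k]]]]]] Hk] //.
- by rewrite (_ : Ordinal Hk = o0) //; apply: val_inj.
- by rewrite (_ : Ordinal Hk = o1) //; apply: val_inj.
- by rewrite (_ : Ordinal Hk = o2) //; apply: val_inj.
- by rewrite (_ : Ordinal Hk = o3) //; apply: val_inj.
- by rewrite (_ : Ordinal Hk = o4) //; apply: val_inj.
- by rewrite (_ : Ordinal Hk = o5) //; apply: val_inj.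
Qed.

Lemma ord3P (P : 'I_3 -> Prop) : P v0 -> P v1 -> P v2 -> forall a, P a.
Proof.
move=> H0 H1 H2 [[|[|[|k]]] Hk] //.
- by rewrite (_ : Ordinal Hk = v0) //; apply: val_inj.
- by rewrite (_ : Ordinal Hk = v1) //; apply: val_inj.
- by rewrite (_ : Ordinal Hk = v2) //; apply: val_inj.
Qed.

Lemma enum6 : enum 'I_6 = [:: o0; o1; o2; o3; o4; o5].
Proof. by apply: (inj_map val_inj); rewrite val_enum_ord. Qed.

Lemma pick6 (P : pred 'I_6) :
  [pick x | P x] = ohead (filter P [:: o0; o1; o2; o3; o4; o5]).
Proof. by rewrite /pick /enum_mem -enumT enum6. Qed.

Definition c3 (l : seq 'I_3) (i : 'I_6) : 'I_3 := nth v0 l i.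
Definition c6 (l : seq 'I_6) (i : 'I_6) : 'I_6 := nth o0 l i.


Definition Ts := c3 [:: v0; v1; v2; v1; v2; v0].
Definition Tt := c3 [:: v1; v2; v0; v0; v1; v2].
Definition Tf := c6 [:: o1; o2; o0; o5; o3; o4].
Definition Ss := c3 [:: v0; v0; v1; v1; v2; v2].
Definition St := c3 [:: v0; v1; v0; v2; v1; v2].
Definition Sf := c6 [:: o1; o2; o0; o5; o3; o4].

Lemma TsE : T_s = Ts.
Proof. by apply: functional_extensionality; apply: ord6P; apply: val_inj; rewrite /= inordK. Qed.
Lemma TtE : T_t = Tt.
Proof. by apply: functional_extensionality; apply: ord6P; apply: val_inj; rewrite /= inordK. Qed.
Lemma TfE : T_f = Tf.
Proof. by apply: functional_extensionality; apply: ord6P; apply: val_inj; rewrite /= inordK. Qed.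
Lemma SsE : S_s = Ss.
Proof. by apply: functional_extensionality; apply: ord6P; apply: val_inj; rewrite /= inordK. Qed.
Lemma StE : S_t = St.
Proof. by apply: functional_extensionality; apply: ord6P; apply: val_inj; rewrite /= inordK. Qed.
Lemma SfE : S_f = Sf.
Proof. by apply: functional_extensionality; apply: ord6P; apply: val_inj; rewrite /= inordK. Qed.

Definition Tbar := c6 [:: o5; o3; o4; o1; o2; o0].
Definition Sbar := c6 [:: o1; o0; o3; o2; o5; o4].
Lemma TbarE : bar Ts = Tbar.
Proof. by apply: functional_extensionality; apply: ord6P; rewrite /bar pick6; vm_compute. Qed.
Lemma SbarE : bar Ss = Sbar.
Proof. by apply: functional_extensionality; apply: ord6P; rewrite /bar pick6; vm_compute. Qed.

Definition Tg := c6 [:: o3; o4; o5; o0; o1; o2].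
Definition Sg := c6 [:: o0; o3; o1; o4; o2; o5].
Lemma TgE : gperm Ts Tf = Tg.
Proof. by rewrite /gperm TbarE; apply: functional_extensionality; apply: ord6P. Qed.
Lemma SgE : gperm Ss Sf = Sg.
Proof. by rewrite /gperm SbarE; apply: functional_extensionality; apply: ord6P. Qed.

Definition Tn (i : 'I_6) : nat := 2.
Definition Sn (i : 'I_6) : nat := nth 0%N [:: 1; 4; 4; 4; 4; 1]%N i.
Lemma TnE : norb Ts Tf = Tn.
Proof.
rewrite /norb TgE; apply: functional_extensionality; apply: ord6P.
- by rewrite (@order_cycle _ _ [:: o0; o3]).
- by rewrite (@order_cycle _ _ [:: o1; o4]).
- by rewrite (@order_cycle _ _ [:: o2; o5]).
- by rewrite (@order_cycle _ _ [:: o0; o3]).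
- by rewrite (@order_cycle _ _ [:: o1; o4]).
- by rewrite (@order_cycle _ _ [:: o2; o5]).
Qed.
Lemma SnE : norb Ss Sf = Sn.
Proof.
rewrite /norb SgE; apply: functional_extensionality; apply: ord6P.
- by rewrite (@order_cycle _ _ [:: o0]).
- by rewrite (@order_cycle _ _ [:: o1; o3; o4; o2]).
- by rewrite (@order_cycle _ _ [:: o1; o3; o4; o2]).
- by rewrite (@order_cycle _ _ [:: o1; o3; o4; o2]).
- by rewrite (@order_cycle _ _ [:: o1; o3; o4; o2]).
- by rewrite (@order_cycle _ _ [:: o5]).
Qed.


Section Ideal.
Variables (K : fieldType) (R : lalgType K) (P : R -> Prop).
Local Notation J := (gen_ideal P).

Lemma J0 : J 0. Proof. exact: gi_0. Qed.
Lemma JD x y : J x -> J y -> J (x + y). Proof. exact: gi_add. Qed.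
Lemma JMl a x : J x -> J (a * x). Proof. exact: gi_mull. Qed.
Lemma JMr x a : J x -> J (x * a). Proof. exact: gi_mulr. Qed.
Lemma JZ (k : K) x : J x -> J (k *: x).
Proof. by move=> H; rewrite -[x]mul1r scalerAl; apply: JMl. Qed.
Lemma JN x : J x -> J (- x).
Proof. by move=> H; rewrite -scaleN1r; apply: JZ. Qed.
Lemma JB x y : J x -> J y -> J (x - y).
Proof. by move=> Hx Hy; apply: JD => //; apply: JN. Qed.

Definition eqv (x y : R) := J (x - y).

Lemma eqv_refl x : eqv x x. Proof. by rewrite /eqv subrr; apply: J0. Qed.
Lemma eqv_sym x y : eqv x y -> eqv y x.
Proof. by rewrite /eqv => H; rewrite -opprB; apply: JN. Qed.
Lemma eqv_trans x y z : eqv x y -> eqv y z -> eqv x z.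
Proof. by rewrite /eqv => H1 H2; rewrite -(subrKA y); apply: JD. Qed.

#[global] Instance eqv_Equiv : Equivalence eqv.
Proof. split; [exact: eqv_refl | exact: eqv_sym | exact: eqv_trans]. Qed.
#[global] Instance add_Proper : Proper (eqv ==> eqv ==> eqv) (@GRing.add R).
Proof. by move=> x x' Hx y y' Hy; rewrite /eqv opprD addrACA; apply: JD. Qed.
#[global] Instance opp_Proper : Proper (eqv ==> eqv) (@GRing.opp R).
Proof. by move=> x x' Hx; rewrite /eqv -opprD; apply: JN. Qed.
#[global] Instance mul_Proper : Proper (eqv ==> eqv ==> eqv) (@GRing.mul R).
Proof.
move=> x x' Hx y y' Hy; rewrite /eqv.
rewrite (_ : x * y - x' * y' = (x - x') * y + x' * (y - y')); last first.
  by rewrite mulrBl mulrBr addrA subrK.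
by apply: JD; [apply: JMr | apply: JMl].
Qed.
#[global] Instance scale_Proper (k : K) : Proper (eqv ==> eqv) (@GRing.scale K R k).
Proof. by move=> x x' Hx; rewrite /eqv -scalerBr; apply: JZ. Qed.

Lemma eqvJ x : J x <-> eqv x 0.
Proof. by rewrite /eqv subr0. Qed.

Lemma ctx2 (x y v p : R) : eqv (x * y) v -> eqv (p * x * y) (p * v).
Proof. by move=> H; rewrite -mulrA H; reflexivity. Qed.
Lemma ctx3 (x y z v p : R) : eqv (x * y * z) v -> eqv (p * x * y * z) (p * v).
Proof. by move=> H; rewrite -(mulrA p) -(mulrA p) H; reflexivity. Qed.
Lemma eqv_inv (X Y : R) (k : K) : k != 0 -> eqv X (k *: Y) -> eqv Y (k^-1 *: X).
Proof. by move=> Hk H; rewrite H scalerA mulVf // scale1r; reflexivity. Qed.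
Lemma fin_sc (k1 k2 : K) (X : R) : k1 = k2 -> eqv (k1 *: X - k2 *: X) 0.
Proof. by move=> ->; rewrite subrr; reflexivity. Qed.
Lemma fin_sc1 (k : K) (X : R) : k = 1 -> eqv (X - k *: X) 0.
Proof. by move=> ->; rewrite scale1r subrr; reflexivity. Qed.
Lemma fin_sc2 (k : K) (X : R) : k = 1 -> eqv (k *: X - X) 0.
Proof. by move=> ->; rewrite scale1r subrr; reflexivity. Qed.
Lemma fin0 : eqv 0 0. Proof. reflexivity. Qed.
Lemma finrr x : eqv (x - x) 0. Proof. by rewrite subrr; reflexivity. Qed.
End Ideal.

Section AbsS.
Variables (K : fieldType) (R : lalgType K) (P : R -> Prop).
Hypothesis HAr : forall (k : K) (x y : R), x * (k *: y) = k *: (x * y).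
Variables (lam : K) (a b g s d h : R).
Hypothesis Hl : lam != 0.
Local Notation eqv := (eqv P).
Hypotheses (R0 : eqv (a * b) (lam *: (b * s * d))) (R1 : eqv (b * g) a)
  (R2 : eqv (g * a) (lam *: (s * d * g))) (R3 : eqv (s * h) (lam *: (g * b * s)))
  (R4 : eqv (d * s) h) (R5 : eqv (h * d) (lam *: (d * g * b))).
Hypotheses (Z1 : eqv (a * b * s) 0) (Z2 : eqv (g * a * a) 0) (Z3 : eqv (h * d * g) 0)
  (Z4 : eqv (s * h * h) 0) (Z5 : eqv (a * a * b) 0) (Z6 : eqv (b * s * h) 0)
  (Z7 : eqv (d * g * a) 0) (Z8 : eqv (h * h * d) 0).

Ltac nrm := rewrite ?HAr -?scalerAl ?mulrA ?scalerA.
Ltac z0 := rewrite ?mulr0 ?mul0r ?scaler0 ?subrr ?sub0r ?oppr0; reflexivity.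

Lemma D0 : eqv (b * s * d) (lam^-1 *: (a * b)). Proof. exact: eqv_inv. Qed.
Lemma D2 : eqv (s * d * g) (lam^-1 *: (g * a)). Proof. exact: eqv_inv. Qed.
Lemma D3 : eqv (g * b * s) (lam^-1 *: (s * h)). Proof. exact: eqv_inv. Qed.
Lemma D5 : eqv (d * g * b) (lam^-1 *: (h * d)). Proof. exact: eqv_inv. Qed.

Lemma cT2_0 : eqv (b * (lam^-1 *: s) - lam^-1 *: (b * s)) 0.
Proof using All. nrm; exact: finrr. Qed.
Lemma cT2_1 : eqv ((lam^-1 *: s) * (d * g) - lam^-2 *: (g * b * g)) 0.
Proof using All. nrm; rewrite (ctx2 _ R1) R2; nrm; apply: fin_sc; by field. Qed.
Lemma cT2_2 : eqv ((d * g) * b - d * (lam^-1 *: s) * d) 0.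
Proof using All. nrm; rewrite R4 R5; nrm; apply: fin_sc1; by field. Qed.
Lemma cT2_3 : eqv (g * (lam^-1 *: (b * s)) - (lam^-1 *: s) * d * (lam^-1 *: s)) 0.
Proof using All. nrm; rewrite (ctx2 _ R4) R3; nrm; apply: fin_sc; by field. Qed.
Lemma cT2_4 : eqv (d * g - d * g) 0.
Proof using All. exact: finrr. Qed.
Lemma cT2_5 : eqv ((lam^-1 *: (b * s)) * d - lam^-2 *: (b * g * b)) 0.
Proof using All. nrm; rewrite R1 R0; nrm; apply: fin_sc; by field. Qed.

Lemma cT3_1 : eqv ((lam^-1 *: s) * (d * g) * (lam^-1 *: (b * s))) 0.
Proof using All. nrm; rewrite D2; nrm; rewrite (ctx3 _ Z1); z0. Qed.
Lemma cT3_2 : eqv (d * g * b * g) 0.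
Proof using All. rewrite (ctx2 _ R1) Z7; z0. Qed.
Lemma cT3_3 : eqv (g * (lam^-1 *: (b * s)) * (d * g)) 0.
Proof using All. nrm; rewrite D3; nrm; rewrite (ctx3 _ Z3); z0. Qed.
Lemma cT3_5 : eqv ((lam^-1 *: (b * s)) * d * (lam^-1 *: s)) 0.
Proof using All. nrm; rewrite (ctx2 _ R4) Z6; z0. Qed.
Lemma cT4_0 : eqv (b * g * (lam^-1 *: (b * s))) 0.
Proof using All. nrm; rewrite R1 Z1; z0. Qed.
Lemma cT4_2 : eqv (d * g * (lam^-1 *: (b * s)) * d) 0.
Proof using All. nrm; rewrite D5; nrm; rewrite (ctx2 _ R4) Z8; z0. Qed.
Lemma cT4_4 : eqv (d * (lam^-1 *: s) * (d * g)) 0.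
Proof using All. nrm; rewrite R4 Z3; z0. Qed.
Lemma cT4_5 : eqv ((lam^-1 *: (b * s)) * (d * g) * b) 0.
Proof using All. nrm; rewrite D0; nrm; rewrite (ctx2 _ R1) Z5; z0. Qed.

Lemma rS_s : eqv (lam *: (lam^-1 *: s)) s.
Proof. by rewrite scalerA mulfV // scale1r; reflexivity. Qed.
Lemma rS_h : eqv (lam *: (d * (lam^-1 *: s))) h.
Proof. by rewrite HAr scalerA mulfV // scale1r R4; reflexivity. Qed.
End AbsS.

Section AbsT.
Variables (K : fieldType) (R : lalgType K) (P : R -> Prop).
Hypothesis HAr : forall (k : K) (x y : R), x * (k *: y) = k *: (x * y).
Variables (lam : K) (x1 x2 x3 y1 y2 y3 : R).
Hypothesis Hl : lam != 0.
Local Notation eqv := (eqv P).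
Hypotheses (Q0 : eqv (x1 * x2) y3) (Q1 : eqv (x2 * x3) (lam^-2 *: (y1 * x1 * y1)))
  (Q2 : eqv (x3 * x1) (y2 * x2 * y2)) (Q3 : eqv (y1 * y3) (x2 * y2 * x2))
  (Q4 : eqv (y2 * y1) x3) (Q5 : eqv (y3 * y2) (lam^-2 *: (x1 * y1 * x1))).
Hypotheses (W1 : eqv (x2 * x3 * y3) 0) (W2 : eqv (x3 * x1 * y1) 0) (W3 : eqv (y1 * y3 * x3) 0)
  (W4 : eqv (y3 * y2 * x2) 0) (W5 : eqv (x1 * y1 * y3) 0) (W6 : eqv (x3 * y3 * y2) 0)
  (W7 : eqv (y3 * x3 * x1) 0) (W8 : eqv (y2 * x2 * x3) 0).

Ltac nrm := rewrite ?HAr -?scalerAl ?mulrA ?scalerA.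
Ltac z0 := rewrite ?mulr0 ?mul0r ?scaler0 ?subrr ?sub0r ?oppr0; reflexivity.

Lemma Hm : lam^-2 != 0. Proof. by rewrite invr_eq0 expf_neq0. Qed.
Lemma E1 : eqv (y1 * x1 * y1) ((lam^-2)^-1 *: (x2 * x3)). Proof. exact: eqv_inv Hm Q1. Qed.
Lemma E5 : eqv (x1 * y1 * x1) ((lam^-2)^-1 *: (y3 * y2)). Proof. exact: eqv_inv Hm Q5. Qed.

Lemma cS2_0 : eqv (x1 * y1 * x1 - lam *: (x1 * (lam *: x2) * y2)) 0.
Proof using All. nrm; rewrite Q0 Q5; nrm; apply: fin_sc1; by field. Qed.
Lemma cS2_1 : eqv (x1 * y1 - x1 * y1) 0.
Proof using All. exact: finrr. Qed.
Lemma cS2_2 : eqv (y1 * (x1 * y1) - lam *: ((lam *: x2) * y2 * y1)) 0.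
Proof using All. nrm; rewrite (ctx2 _ Q4) Q1; nrm; apply: fin_sc1; by field. Qed.
Lemma cS2_3 : eqv ((lam *: x2) * (lam *: (y2 * x2)) - lam *: (y1 * x1 * (lam *: x2))) 0.
Proof using All. nrm; rewrite (ctx2 _ Q0) Q3; nrm; apply: fin_sc; by field. Qed.
Lemma cS2_4 : eqv (y2 * (lam *: x2) - lam *: (y2 * x2)) 0.
Proof using All. nrm; exact: finrr. Qed.
Lemma cS2_5 : eqv ((lam *: (y2 * x2)) * y2 - lam *: (y2 * y1 * x1)) 0.
Proof using All. nrm; rewrite Q4 Q2; nrm; exact: finrr. Qed.

Lemma cS3_0 : eqv (x1 * y1 * x1 * (lam *: x2)) 0.
Proof using All. nrm; rewrite (ctx2 _ Q0) W5; z0. Qed.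
Lemma cS3_2 : eqv (y1 * (x1 * y1) * (x1 * y1)) 0.
Proof using All. nrm; rewrite E1; nrm; rewrite (ctx3 _ W2); z0. Qed.
Lemma cS3_3 : eqv ((lam *: x2) * (lam *: (y2 * x2)) * (lam *: (y2 * x2))) 0.
Proof using All. nrm; rewrite -Q3; nrm; rewrite (ctx3 _ W4); z0. Qed.
Lemma cS3_5 : eqv ((lam *: (y2 * x2)) * y2 * y1) 0.
Proof using All. nrm; rewrite (ctx2 _ Q4) W8; z0. Qed.
Lemma cS4_0 : eqv (x1 * y1 * (x1 * y1) * x1) 0.
Proof using All. nrm; rewrite E5; nrm; rewrite (ctx2 _ Q4) W7; z0. Qed.
Lemma cS4_1 : eqv (x1 * (lam *: x2) * (lam *: (y2 * x2))) 0.
Proof using All. nrm; rewrite Q0 W4; z0. Qed.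
Lemma cS4_4 : eqv (y2 * y1 * (x1 * y1)) 0.
Proof using All. nrm; rewrite Q4 W2; z0. Qed.
Lemma cS4_5 : eqv ((lam *: (y2 * x2)) * (lam *: (y2 * x2)) * y2) 0.
Proof using All. nrm; rewrite (ctx3 _ (eqv_sym Q3)); nrm; rewrite Q4 W6; z0. Qed.

Lemma rT_x2 : eqv (lam^-1 *: (lam *: x2)) x2.
Proof. by rewrite scalerA mulVf // scale1r; reflexivity. Qed.
Lemma rT_y3 : eqv (lam^-1 *: (x1 * (lam *: x2))) y3.
Proof. by rewrite HAr scalerA mulVf // scale1r Q0; reflexivity. Qed.
End AbsT.

Section Closure.
Variables (K : fieldType) (R : lalgType K) (P : R -> Prop).
Local Notation J := (gen_ideal P).
Variable f : R -> R.
Lemma Qadd x y : f (x + y) = f x + f y -> J (f x - x) -> J (f y - y) -> J (f (x + y) - (x + y)).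
Proof. by move=> -> Hx Hy; rewrite opprD addrACA; apply: JD. Qed.
Lemma Qscale (k : K) x : f (k *: x) = k *: f x -> J (f x - x) -> J (f (k *: x) - k *: x).
Proof. by move=> -> Hx; rewrite -scalerBr; apply: JZ. Qed.
Lemma Qmul x y : f (x * y) = f x * f y -> J (f x - x) -> J (f y - y) -> J (f (x * y) - x * y).
Proof.
move=> -> Hx Hy.
rewrite (_ : f x * f y - x * y = (f x - x) * f y + x * (f y - y)); last first.
  by rewrite mulrBl mulrBr addrA subrK.
by apply: JD; [apply: JMr | apply: JMl].
Qed.
Lemma Qeq x y : x = y -> J (x - y). Proof. by move=> ->; rewrite subrr; apply: J0. Qed.

Lemma Jsp (x y z : R) : J (x * y - y) -> J (x * (y * z) - y * z).
Proof. by move=> H; rewrite mulrA -mulrBl; apply: JMr. Qed.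
Lemma Jtp (x y z : R) : J (z * x - z) -> J ((y * z) * x - y * z).
Proof. by move=> H; rewrite -mulrA -mulrBr; apply: JMl. Qed.
Lemma Jts (k : K) (x y : R) : J (y * x - y) -> J ((k *: y) * x - k *: y).
Proof. by move=> H; rewrite -scalerAl -scalerBr; apply: JZ. Qed.
Hypothesis HAr : forall (k : K) (x y : R), x * (k *: y) = k *: (x * y).
Lemma Jss (k : K) (x y : R) : J (x * y - y) -> J (x * (k *: y) - k *: y).
Proof. by move=> H; rewrite HAr -scalerBr; apply: JZ. Qed.
End Closure.

Section MapTS.
Variables (K : fieldType) (R : lalgType K) (P : R -> Prop).
Local Notation J := (gen_ideal P).
Hypothesis HAr : forall (k : K) (x y : R), x * (k *: y) = k *: (x * y).
Variables (f : R -> R) (lam : K).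
Hypothesis Hl : lam != 0.
Hypotheses (fB : forall x y, f (x - y) = f x - f y) (fM : forall x y, f (x * y) = f x * f y)
  (fZ : forall (k : K) x, f (k *: x) = k *: f x).
Variables (x1 x2 x3 y1 y2 y3 a b g s d h : R).
Hypotheses (H1 : f x1 = b) (H2 : f x2 = lam^-1 *: s) (H3 : f x3 = d * g) (H4 : f y1 = g)
  (H5 : f y2 = d) (H6 : f y3 = lam^-1 *: (b * s)).
Local Notation eqv := (eqv P).
Hypotheses (R0 : eqv (a * b) (lam *: (b * s * d))) (R1 : eqv (b * g) a)
  (R2 : eqv (g * a) (lam *: (s * d * g))) (R3 : eqv (s * h) (lam *: (g * b * s)))
  (R4 : eqv (d * s) h) (R5 : eqv (h * d) (lam *: (d * g * b))).
Hypotheses (Z1 : eqv (a * b * s) 0) (Z2 : eqv (g * a * a) 0) (Z3 : eqv (h * d * g) 0)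
  (Z4 : eqv (s * h * h) 0) (Z5 : eqv (a * a * b) 0) (Z6 : eqv (b * s * h) 0)
  (Z7 : eqv (d * g * a) 0) (Z8 : eqv (h * h * d) 0).
Ltac cf := rewrite ?fB ?fZ !fM ?fM ?H1 ?H2 ?H3 ?H4 ?H5 ?H6; apply/eqvJ.

Lemma mT2_0 : J (f (x1 * x2 - y3)). Proof using All. cf; exact: (cT2_0 HAr Hl R0 R1 R2 R3 R4 R5 Z1 Z2 Z3 Z4 Z5 Z6 Z7 Z8). Qed.
Lemma mT2_1 : J (f (x2 * x3 - lam^-2 *: (y1 * x1 * y1))). Proof using All. cf; exact: (cT2_1 HAr Hl R0 R1 R2 R3 R4 R5 Z1 Z2 Z3 Z4 Z5 Z6 Z7 Z8). Qed.
Lemma mT2_2 : J (f (x3 * x1 - y2 * x2 * y2)). Proof using All. cf; exact: (cT2_2 HAr Hl R0 R1 R2 R3 R4 R5 Z1 Z2 Z3 Z4 Z5 Z6 Z7 Z8). Qed.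
Lemma mT2_3 : J (f (y1 * y3 - x2 * y2 * x2)). Proof using All. cf; exact: (cT2_3 HAr Hl R0 R1 R2 R3 R4 R5 Z1 Z2 Z3 Z4 Z5 Z6 Z7 Z8). Qed.
Lemma mT2_4 : J (f (y2 * y1 - x3)). Proof using All. cf; exact: (cT2_4 HAr Hl R0 R1 R2 R3 R4 R5 Z1 Z2 Z3 Z4 Z5 Z6 Z7 Z8). Qed.
Lemma mT2_5 : J (f (y3 * y2 - lam^-2 *: (x1 * y1 * x1))). Proof using All. cf; exact: (cT2_5 HAr Hl R0 R1 R2 R3 R4 R5 Z1 Z2 Z3 Z4 Z5 Z6 Z7 Z8). Qed.
Lemma mT3_1 : J (f (x2 * x3 * y3)). Proof using All. cf; exact: (cT3_1 HAr Hl R0 R1 R2 R3 R4 R5 Z1 Z2 Z3 Z4 Z5 Z6 Z7 Z8). Qed.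
Lemma mT3_2 : J (f (x3 * x1 * y1)). Proof using All. cf; exact: (cT3_2 HAr Hl R0 R1 R2 R3 R4 R5 Z1 Z2 Z3 Z4 Z5 Z6 Z7 Z8). Qed.
Lemma mT3_3 : J (f (y1 * y3 * x3)). Proof using All. cf; exact: (cT3_3 HAr Hl R0 R1 R2 R3 R4 R5 Z1 Z2 Z3 Z4 Z5 Z6 Z7 Z8). Qed.
Lemma mT3_5 : J (f (y3 * y2 * x2)). Proof using All. cf; exact: (cT3_5 HAr Hl R0 R1 R2 R3 R4 R5 Z1 Z2 Z3 Z4 Z5 Z6 Z7 Z8). Qed.
Lemma mT4_0 : J (f (x1 * y1 * y3)). Proof using All. cf; exact: (cT4_0 HAr Hl R0 R1 R2 R3 R4 R5 Z1 Z2 Z3 Z4 Z5 Z6 Z7 Z8). Qed.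
Lemma mT4_2 : J (f (x3 * y3 * y2)). Proof using All. cf; exact: (cT4_2 HAr Hl R0 R1 R2 R3 R4 R5 Z1 Z2 Z3 Z4 Z5 Z6 Z7 Z8). Qed.
Lemma mT4_4 : J (f (y2 * x2 * x3)). Proof using All. cf; exact: (cT4_4 HAr Hl R0 R1 R2 R3 R4 R5 Z1 Z2 Z3 Z4 Z5 Z6 Z7 Z8). Qed.
Lemma mT4_5 : J (f (y3 * x3 * x1)). Proof using All. cf; exact: (cT4_5 HAr Hl R0 R1 R2 R3 R4 R5 Z1 Z2 Z3 Z4 Z5 Z6 Z7 Z8). Qed.
End MapTS.

Section MapST.
Variables (K : fieldType) (R : lalgType K) (P : R -> Prop).
Local Notation J := (gen_ideal P).
Hypothesis HAr : forall (k : K) (x y : R), x * (k *: y) = k *: (x * y).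
Variables (f : R -> R) (lam : K).
Hypothesis Hl : lam != 0.
Hypotheses (fB : forall x y, f (x - y) = f x - f y) (fM : forall x y, f (x * y) = f x * f y)
  (fZ : forall (k : K) x, f (k *: x) = k *: f x).
Variables (x1 x2 x3 y1 y2 y3 a b g s d h : R).
Hypotheses (H1 : f a = x1 * y1) (H2 : f b = x1) (H3 : f g = y1) (H4 : f s = lam *: x2)
  (H5 : f d = y2) (H6 : f h = lam *: (y2 * x2)).
Local Notation eqv := (eqv P).
Hypotheses (Q0 : eqv (x1 * x2) y3) (Q1 : eqv (x2 * x3) (lam^-2 *: (y1 * x1 * y1)))
  (Q2 : eqv (x3 * x1) (y2 * x2 * y2)) (Q3 : eqv (y1 * y3) (x2 * y2 * x2))
  (Q4 : eqv (y2 * y1) x3) (Q5 : eqv (y3 * y2) (lam^-2 *: (x1 * y1 * x1))).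
Hypotheses (W1 : eqv (x2 * x3 * y3) 0) (W2 : eqv (x3 * x1 * y1) 0) (W3 : eqv (y1 * y3 * x3) 0)
  (W4 : eqv (y3 * y2 * x2) 0) (W5 : eqv (x1 * y1 * y3) 0) (W6 : eqv (x3 * y3 * y2) 0)
  (W7 : eqv (y3 * x3 * x1) 0) (W8 : eqv (y2 * x2 * x3) 0).
Ltac cf := rewrite ?fB ?fZ !fM ?fM ?H1 ?H2 ?H3 ?H4 ?H5 ?H6; apply/eqvJ.

Lemma mS2_0 : J (f (a * b - lam *: (b * s * d))). Proof using All. cf; exact: (cS2_0 HAr Hl Q0 Q1 Q2 Q3 Q4 Q5 W1 W2 W3 W4 W5 W6 W7 W8). Qed.
Lemma mS2_1 : J (f (b * g - a)). Proof using All. cf; exact: (cS2_1 HAr Hl Q0 Q1 Q2 Q3 Q4 Q5 W1 W2 W3 W4 W5 W6 W7 W8). Qed.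
Lemma mS2_2 : J (f (g * a - lam *: (s * d * g))). Proof using All. cf; exact: (cS2_2 HAr Hl Q0 Q1 Q2 Q3 Q4 Q5 W1 W2 W3 W4 W5 W6 W7 W8). Qed.
Lemma mS2_3 : J (f (s * h - lam *: (g * b * s))). Proof using All. cf; exact: (cS2_3 HAr Hl Q0 Q1 Q2 Q3 Q4 Q5 W1 W2 W3 W4 W5 W6 W7 W8). Qed.
Lemma mS2_4 : J (f (d * s - h)). Proof using All. cf; exact: (cS2_4 HAr Hl Q0 Q1 Q2 Q3 Q4 Q5 W1 W2 W3 W4 W5 W6 W7 W8). Qed.
Lemma mS2_5 : J (f (h * d - lam *: (d * g * b))). Proof using All. cf; exact: (cS2_5 HAr Hl Q0 Q1 Q2 Q3 Q4 Q5 W1 W2 W3 W4 W5 W6 W7 W8). Qed.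
Lemma mS3_0 : J (f (a * b * s)). Proof using All. cf; exact: (cS3_0 HAr Hl Q0 Q1 Q2 Q3 Q4 Q5 W1 W2 W3 W4 W5 W6 W7 W8). Qed.
Lemma mS3_2 : J (f (g * a * a)). Proof using All. cf; exact: (cS3_2 HAr Hl Q0 Q1 Q2 Q3 Q4 Q5 W1 W2 W3 W4 W5 W6 W7 W8). Qed.
Lemma mS3_3 : J (f (s * h * h)). Proof using All. cf; exact: (cS3_3 HAr Hl Q0 Q1 Q2 Q3 Q4 Q5 W1 W2 W3 W4 W5 W6 W7 W8). Qed.
Lemma mS3_5 : J (f (h * d * g)). Proof using All. cf; exact: (cS3_5 HAr Hl Q0 Q1 Q2 Q3 Q4 Q5 W1 W2 W3 W4 W5 W6 W7 W8). Qed.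
Lemma mS4_0 : J (f (a * a * b)). Proof using All. cf; exact: (cS4_0 HAr Hl Q0 Q1 Q2 Q3 Q4 Q5 W1 W2 W3 W4 W5 W6 W7 W8). Qed.
Lemma mS4_1 : J (f (b * s * h)). Proof using All. cf; exact: (cS4_1 HAr Hl Q0 Q1 Q2 Q3 Q4 Q5 W1 W2 W3 W4 W5 W6 W7 W8). Qed.
Lemma mS4_4 : J (f (d * g * a)). Proof using All. cf; exact: (cS4_4 HAr Hl Q0 Q1 Q2 Q3 Q4 Q5 W1 W2 W3 W4 W5 W6 W7 W8). Qed.
Lemma mS4_5 : J (f (h * h * d)). Proof using All. cf; exact: (cS4_5 HAr Hl Q0 Q1 Q2 Q3 Q4 Q5 W1 W2 W3 W4 W5 W6 W7 W8). Qed.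
End MapST.

Section GQ.
Variables (K : fieldType) (R : lalgType K) (P : R -> Prop).
Local Notation J := (gen_ideal P).
Variables (f : R -> R).
Hypotheses (fB : forall x y, f (x - y) = f x - f y) (fM : forall x y, f (x * y) = f x * f y)
  (fD : forall x y, f (x + y) = f x + f y) (f0 : f 0 = 0) (f1 : f 1 = 1)
  (fn : forall n, f n%:R = n%:R).
Lemma gvv (u w : R) n : f u = u -> f w = w -> J (u * w - n%:R * u) -> J (f (u * w - n%:R * u)).
Proof using All. by move=> Hu Hw; rewrite fB !fM fn Hu Hw. Qed.
Lemma gsum (I : finType) (E : I -> R) : (forall i, f (E i) = E i) ->
  J (\sum_i E i - 1) -> J (f (\sum_i E i - 1)).
Proof using All.
move=> HE; rewrite fB f1 (big_morph f fD f0).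
by under eq_bigr do rewrite HE.
Qed.
Lemma gQs (u y v : R) : f u = u -> f y = v -> J (u * v - v) -> J (f (u * y - y)).
Proof using All. by move=> Hu Hy; rewrite fB fM Hu Hy. Qed.
Lemma gQt (u y v : R) : f u = u -> f y = v -> J (v * u - v) -> J (f (y * u - y)).
Proof using All. by move=> Hu Hy; rewrite fB fM Hu Hy. Qed.
End GQ.

Section RT.
Variables (K : fieldType) (R : lalgType K) (P : R -> Prop).
Local Notation J := (gen_ideal P).
Hypothesis HAr : forall (k : K) (x y : R), x * (k *: y) = k *: (x * y).
Variables (f1 f2 : R -> R).
Hypotheses (f2M : forall x y, f2 (x * y) = f2 x * f2 y)
  (f2Z : forall (k : K) x, f2 (k *: x) = k *: f2 x).
Lemma rt_id x y : f1 x = y -> f2 y = x -> J (f2 (f1 x) - x).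
Proof using All. by move=> -> ->; rewrite subrr; apply: J0. Qed.
Lemma rt_sc x y (k k' : K) : f1 x = k *: y -> f2 y = k' *: x -> k * k' = 1 -> J (f2 (f1 x) - x).
Proof using All. by move=> -> Hy Hk; rewrite f2Z Hy scalerA Hk scale1r subrr; apply: J0. Qed.
Lemma rt_prod x y z u w : f1 x = y * z -> f2 y = u -> f2 z = w -> eqv P (u * w) x ->
  J (f2 (f1 x) - x).
Proof using All. by move=> -> Hy Hz H; rewrite f2M Hy Hz. Qed.
Lemma rt_scprod x y z u w (k k' : K) : f1 x = k *: (y * z) -> f2 y = u -> f2 z = k' *: w ->
  k * k' = 1 -> eqv P (u * w) x -> J (f2 (f1 x) - x).
Proof using All. by move=> -> Hy Hz Hk H; rewrite f2Z f2M Hy Hz HAr scalerA Hk scale1r. Qed.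
End RT.


Ltac simp := unfold Ts, Tt, Tf, Tbar, Tg, Tn, Ss, St, Sf, Sbar, Sg, Sn, T_c, S_c, T_m, S_m, c3, c6, tabK, tabn; simpl.

Section Rels.
Variables (K : fieldType).
Local Notation F := (FreeAlg K 'I_3 'I_6).
Local Notation A := (arr K 'I_3).
Local Notation e := (vtx K 'I_6).
Definition PT (mu : K) := wsa_rel Ts Tt Tf T_m (T_c mu).
Definition PS (lam : K) := wsa_rel Ss St Sf S_m (S_c lam).

Lemma scalerAr' (k : K) (x y : F) : x * (k *: y) = k *: (x * y).
Proof. have -> : k *: y = k%:A * y by rewrite -scalerAl mul1r. by rewrite mulrA malgC_comm -scalerAl. Qed.

Lemma rel2 (s t : 'I_6 -> 'I_3) (f : 'I_6 -> 'I_6) (m : 'I_6 -> nat) (c : 'I_6 -> K) a :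
  gen_ideal (wsa_rel s t f m c)
   (A a * A (f a) - c (bar s a) *: Apath K s f m (bar s a)).
Proof. by apply: gi_gen; right; left; exists a. Qed.

Lemma pthE (l : seq 'I_6) : pth K 'I_3 l = \prod_(b <- l) A b.
Proof. by []. Qed.

Lemma Jeq (P : F -> Prop) x y : gen_ideal P x -> x = y -> gen_ideal P y.
Proof. by move=> H <-. Qed.

Lemma rel3 (s t : 'I_6 -> 'I_3) (f : 'I_6 -> 'I_6) (m : 'I_6 -> nat) (c : 'I_6 -> K) a :
  ~~ virtual s f m (f (f a)) ->
  gen_ideal (wsa_rel s t f m c) (A a * A (f a) * A (gperm s f (f a))).
Proof. by move=> H; apply: gi_gen; right; right; left; exists a. Qed.

Lemma rel4 (s t : 'I_6 -> 'I_3) (f : 'I_6 -> 'I_6) (m : 'I_6 -> nat) (c : 'I_6 -> K) a :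
  ~~ virtual s f m (f a) ->
  gen_ideal (wsa_rel s t f m c) (A a * A (gperm s f a) * A (f (gperm s f a))).
Proof. by move=> H; apply: gi_gen; right; right; right; exists a. Qed.

Lemma relqs (s t : 'I_6 -> 'I_3) (f : 'I_6 -> 'I_6) (m : 'I_6 -> nat) (c : 'I_6 -> K) a :
  gen_ideal (wsa_rel s t f m c) (e (s a) * A a - A a).
Proof. by apply: gi_gen; left; right; right; left; exists a. Qed.

Lemma relqt (s t : 'I_6 -> 'I_3) (f : 'I_6 -> 'I_6) (m : 'I_6 -> nat) (c : 'I_6 -> K) a :
  gen_ideal (wsa_rel s t f m c) (A a * e (t a) - A a).
Proof. by apply: gi_gen; left; right; right; right; exists a. Qed.

Lemma pth1 (a : 'I_6) : pth K 'I_3 [:: a] = A a.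
Proof. by rewrite pthE big_cons big_nil mulr1. Qed.
Lemma pth3 (a b c : 'I_6) : pth K 'I_3 [:: a; b; c] = A a * A b * A c.
Proof. by rewrite pthE !big_cons big_nil mulr1 mulrA. Qed.

Ltac relfin := rewrite /Apath ?TbarE ?TgE ?TnE ?SbarE ?SgE ?SnE; simp;
  rewrite ?pth1 ?pth3 ?scale1r.
Ltac relfin0 := rewrite subr0 /Apath ?TbarE ?TgE ?TnE ?SbarE ?SgE ?SnE; simp.
Ltac virt := rewrite /virtual ?TnE ?SnE; simp.

Variable mu : K.
Local Notation T := (PT mu).
Lemma TR0 : eqv T (A o0 * A o1) (A o5).
Proof. by apply: (Jeq (rel2 Ts Tt Tf T_m (T_c mu) o0)); relfin. Qed.
Lemma TR1 : eqv T (A o1 * A o2) (mu *: (A o3 * A o0 * A o3)).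
Proof. by apply: (Jeq (rel2 Ts Tt Tf T_m (T_c mu) o1)); relfin. Qed.
Lemma TR2 : eqv T (A o2 * A o0) (A o4 * A o1 * A o4).
Proof. by apply: (Jeq (rel2 Ts Tt Tf T_m (T_c mu) o2)); relfin. Qed.
Lemma TR3 : eqv T (A o3 * A o5) (A o1 * A o4 * A o1).
Proof. by apply: (Jeq (rel2 Ts Tt Tf T_m (T_c mu) o3)); relfin. Qed.
Lemma TR4 : eqv T (A o4 * A o3) (A o2).
Proof. by apply: (Jeq (rel2 Ts Tt Tf T_m (T_c mu) o4)); relfin. Qed.
Lemma TR5 : eqv T (A o5 * A o4) (mu *: (A o0 * A o3 * A o0)).
Proof. by apply: (Jeq (rel2 Ts Tt Tf T_m (T_c mu) o5)); relfin. Qed.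

Lemma TZ3a : eqv T (A o1 * A o2 * A o5) 0.
Proof. by apply: (Jeq (@rel3 Ts Tt Tf T_m (T_c mu) o1 _)); [virt | relfin0]. Qed.
Lemma TZ3b : eqv T (A o2 * A o0 * A o3) 0.
Proof. by apply: (Jeq (@rel3 Ts Tt Tf T_m (T_c mu) o2 _)); [virt | relfin0]. Qed.
Lemma TZ3c : eqv T (A o3 * A o5 * A o2) 0.
Proof. by apply: (Jeq (@rel3 Ts Tt Tf T_m (T_c mu) o3 _)); [virt | relfin0]. Qed.
Lemma TZ3d : eqv T (A o5 * A o4 * A o1) 0.
Proof. by apply: (Jeq (@rel3 Ts Tt Tf T_m (T_c mu) o5 _)); [virt | relfin0]. Qed.
Lemma TZ4a : eqv T (A o0 * A o3 * A o5) 0.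
Proof. by apply: (Jeq (@rel4 Ts Tt Tf T_m (T_c mu) o0 _)); [virt | relfin0]. Qed.
Lemma TZ4b : eqv T (A o2 * A o5 * A o4) 0.
Proof. by apply: (Jeq (@rel4 Ts Tt Tf T_m (T_c mu) o2 _)); [virt | relfin0]. Qed.
Lemma TZ4c : eqv T (A o5 * A o2 * A o0) 0.
Proof. by apply: (Jeq (@rel4 Ts Tt Tf T_m (T_c mu) o5 _)); [virt | relfin0]. Qed.
Lemma TZ4d : eqv T (A o4 * A o1 * A o2) 0.
Proof. by apply: (Jeq (@rel4 Ts Tt Tf T_m (T_c mu) o4 _)); [virt | relfin0]. Qed.

Variable lam : K.
Local Notation S := (PS lam).
Lemma SR0 : eqv S (A o0 * A o1) (lam *: (A o1 * A o3 * A o4)).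
Proof. by apply: (Jeq (rel2 Ss St Sf S_m (S_c lam) o0)); relfin. Qed.
Lemma SR1 : eqv S (A o1 * A o2) (A o0).
Proof. by apply: (Jeq (rel2 Ss St Sf S_m (S_c lam) o1)); relfin. Qed.
Lemma SR2 : eqv S (A o2 * A o0) (lam *: (A o3 * A o4 * A o2)).
Proof. by apply: (Jeq (rel2 Ss St Sf S_m (S_c lam) o2)); relfin. Qed.
Lemma SR3 : eqv S (A o3 * A o5) (lam *: (A o2 * A o1 * A o3)).
Proof. by apply: (Jeq (rel2 Ss St Sf S_m (S_c lam) o3)); relfin. Qed.
Lemma SR4 : eqv S (A o4 * A o3) (A o5).
Proof. by apply: (Jeq (rel2 Ss St Sf S_m (S_c lam) o4)); relfin. Qed.
Lemma SR5 : eqv S (A o5 * A o4) (lam *: (A o4 * A o2 * A o1)).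
Proof. by apply: (Jeq (rel2 Ss St Sf S_m (S_c lam) o5)); relfin. Qed.

Lemma SZ3a : eqv S (A o0 * A o1 * A o3) 0.
Proof. by apply: (Jeq (@rel3 Ss St Sf S_m (S_c lam) o0 _)); [virt | relfin0]. Qed.
Lemma SZ3b : eqv S (A o2 * A o0 * A o0) 0.
Proof. by apply: (Jeq (@rel3 Ss St Sf S_m (S_c lam) o2 _)); [virt | relfin0]. Qed.
Lemma SZ3c : eqv S (A o5 * A o4 * A o2) 0.
Proof. by apply: (Jeq (@rel3 Ss St Sf S_m (S_c lam) o5 _)); [virt | relfin0]. Qed.
Lemma SZ3d : eqv S (A o3 * A o5 * A o5) 0.
Proof. by apply: (Jeq (@rel3 Ss St Sf S_m (S_c lam) o3 _)); [virt | relfin0]. Qed.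
Lemma SZ4a : eqv S (A o0 * A o0 * A o1) 0.
Proof. by apply: (Jeq (@rel4 Ss St Sf S_m (S_c lam) o0 _)); [virt | relfin0]. Qed.
Lemma SZ4b : eqv S (A o1 * A o3 * A o5) 0.
Proof. by apply: (Jeq (@rel4 Ss St Sf S_m (S_c lam) o1 _)); [virt | relfin0]. Qed.
Lemma SZ4c : eqv S (A o4 * A o2 * A o0) 0.
Proof. by apply: (Jeq (@rel4 Ss St Sf S_m (S_c lam) o4 _)); [virt | relfin0]. Qed.
Lemma SZ4d : eqv S (A o5 * A o5 * A o4) 0.
Proof. by apply: (Jeq (@rel4 Ss St Sf S_m (S_c lam) o5 _)); [virt | relfin0]. Qed.
End Rels.

Section Elems.
Variables (K : fieldType) (mu lam : K).
Local Notation F := (FreeAlg K 'I_3 'I_6).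
Local Notation A := (arr K 'I_3).
Ltac relfin := rewrite /Apath ?TbarE ?TgE ?TnE ?SbarE ?SgE ?SnE; simp;
  rewrite ?pth1 ?pth3 ?scale1r.
Ltac virt := rewrite /virtual ?TnE ?SnE; simp.

Lemma T2_0 : A o0 * A (Tf o0) - T_c mu (Tbar o0) *: Apath K Ts Tf T_m (Tbar o0) = A o0 * A o1 - A o5.
Proof. by relfin. Qed.
Lemma T2_1 : A o1 * A (Tf o1) - T_c mu (Tbar o1) *: Apath K Ts Tf T_m (Tbar o1) = A o1 * A o2 - mu *: (A o3 * A o0 * A o3).
Proof. by relfin. Qed.
Lemma T2_2 : A o2 * A (Tf o2) - T_c mu (Tbar o2) *: Apath K Ts Tf T_m (Tbar o2) = A o2 * A o0 - A o4 * A o1 * A o4.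
Proof. by relfin. Qed.
Lemma T2_3 : A o3 * A (Tf o3) - T_c mu (Tbar o3) *: Apath K Ts Tf T_m (Tbar o3) = A o3 * A o5 - A o1 * A o4 * A o1.
Proof. by relfin. Qed.
Lemma T2_4 : A o4 * A (Tf o4) - T_c mu (Tbar o4) *: Apath K Ts Tf T_m (Tbar o4) = A o4 * A o3 - A o2.
Proof. by relfin. Qed.
Lemma T2_5 : A o5 * A (Tf o5) - T_c mu (Tbar o5) *: Apath K Ts Tf T_m (Tbar o5) = A o5 * A o4 - mu *: (A o0 * A o3 * A o0).
Proof. by relfin. Qed.

Lemma S2_0 : A o0 * A (Sf o0) - S_c lam (Sbar o0) *: Apath K Ss Sf S_m (Sbar o0) = A o0 * A o1 - lam *: (A o1 * A o3 * A o4).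
Proof. by relfin. Qed.
Lemma S2_1 : A o1 * A (Sf o1) - S_c lam (Sbar o1) *: Apath K Ss Sf S_m (Sbar o1) = A o1 * A o2 - A o0.
Proof. by relfin. Qed.
Lemma S2_2 : A o2 * A (Sf o2) - S_c lam (Sbar o2) *: Apath K Ss Sf S_m (Sbar o2) = A o2 * A o0 - lam *: (A o3 * A o4 * A o2).
Proof. by relfin. Qed.
Lemma S2_3 : A o3 * A (Sf o3) - S_c lam (Sbar o3) *: Apath K Ss Sf S_m (Sbar o3) = A o3 * A o5 - lam *: (A o2 * A o1 * A o3).
Proof. by relfin. Qed.
Lemma S2_4 : A o4 * A (Sf o4) - S_c lam (Sbar o4) *: Apath K Ss Sf S_m (Sbar o4) = A o4 * A o3 - A o5.
Proof. by relfin. Qed.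
Lemma S2_5 : A o5 * A (Sf o5) - S_c lam (Sbar o5) *: Apath K Ss Sf S_m (Sbar o5) = A o5 * A o4 - lam *: (A o4 * A o2 * A o1).
Proof. by relfin. Qed.

Lemma Tv3_0 : virtual Ts Tf T_m (Tf (Tf o0)). Proof. by virt. Qed.
Lemma Tv3_4 : virtual Ts Tf T_m (Tf (Tf o4)). Proof. by virt. Qed.
Lemma Tv4_1 : virtual Ts Tf T_m (Tf o1). Proof. by virt. Qed.
Lemma Tv4_3 : virtual Ts Tf T_m (Tf o3). Proof. by virt. Qed.
Lemma Sv3_1 : virtual Ss Sf S_m (Sf (Sf o1)). Proof. by virt. Qed.
Lemma Sv3_4 : virtual Ss Sf S_m (Sf (Sf o4)). Proof. by virt. Qed.
Lemma Sv4_2 : virtual Ss Sf S_m (Sf o2). Proof. by virt. Qed.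
Lemma Sv4_3 : virtual Ss Sf S_m (Sf o3). Proof. by virt. Qed.

Lemma T3_1 : A o1 * A (Tf o1) * A (gperm Ts Tf (Tf o1)) = A o1 * A o2 * A o5. Proof. by relfin. Qed.
Lemma T3_2 : A o2 * A (Tf o2) * A (gperm Ts Tf (Tf o2)) = A o2 * A o0 * A o3. Proof. by relfin. Qed.
Lemma T3_3 : A o3 * A (Tf o3) * A (gperm Ts Tf (Tf o3)) = A o3 * A o5 * A o2. Proof. by relfin. Qed.
Lemma T3_5 : A o5 * A (Tf o5) * A (gperm Ts Tf (Tf o5)) = A o5 * A o4 * A o1. Proof. by relfin. Qed.
Lemma T4_0 : A o0 * A (gperm Ts Tf o0) * A (Tf (gperm Ts Tf o0)) = A o0 * A o3 * A o5. Proof. by relfin. Qed.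
Lemma T4_2 : A o2 * A (gperm Ts Tf o2) * A (Tf (gperm Ts Tf o2)) = A o2 * A o5 * A o4. Proof. by relfin. Qed.
Lemma T4_4 : A o4 * A (gperm Ts Tf o4) * A (Tf (gperm Ts Tf o4)) = A o4 * A o1 * A o2. Proof. by relfin. Qed.
Lemma T4_5 : A o5 * A (gperm Ts Tf o5) * A (Tf (gperm Ts Tf o5)) = A o5 * A o2 * A o0. Proof. by relfin. Qed.

Lemma S3_0 : A o0 * A (Sf o0) * A (gperm Ss Sf (Sf o0)) = A o0 * A o1 * A o3. Proof. by relfin. Qed.
Lemma S3_2 : A o2 * A (Sf o2) * A (gperm Ss Sf (Sf o2)) = A o2 * A o0 * A o0. Proof. by relfin. Qed.
Lemma S3_3 : A o3 * A (Sf o3) * A (gperm Ss Sf (Sf o3)) = A o3 * A o5 * A o5. Proof. by relfin. Qed.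
Lemma S3_5 : A o5 * A (Sf o5) * A (gperm Ss Sf (Sf o5)) = A o5 * A o4 * A o2. Proof. by relfin. Qed.
Lemma S4_0 : A o0 * A (gperm Ss Sf o0) * A (Sf (gperm Ss Sf o0)) = A o0 * A o0 * A o1. Proof. by relfin. Qed.
Lemma S4_1 : A o1 * A (gperm Ss Sf o1) * A (Sf (gperm Ss Sf o1)) = A o1 * A o3 * A o5. Proof. by relfin. Qed.
Lemma S4_4 : A o4 * A (gperm Ss Sf o4) * A (Sf (gperm Ss Sf o4)) = A o4 * A o2 * A o0. Proof. by relfin. Qed.
Lemma S4_5 : A o5 * A (gperm Ss Sf o5) * A (Sf (gperm Ss Sf o5)) = A o5 * A o5 * A o4. Proof. by relfin. Qed.
End Elems.


Section Main.
Variables (K : fieldType) (lam : K).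
Hypothesis Hl : lam != 0.
Local Notation F := (FreeAlg K 'I_3 'I_6).
Local Notation A := (arr K 'I_3).
Local Notation e := (vtx K 'I_6).
Local Notation mu := (lam ^- 2).

Definition AA := locked (arr K 'I_3).
Lemma AE : arr K 'I_3 = AA. Proof. by rewrite /AA -lock. Qed.
Definition EE := locked (@vtx K 'I_3 'I_6).
Lemma EEq : @vtx K 'I_3 'I_6 = EE. Proof. by rewrite /EE -lock. Qed.

Definition gT (i : 'I_3 + 'I_6) : F :=
  match i with inl v => EE v
  | inr a => nth 0 [:: AA o1; lam^-1 *: AA o3; AA o4 * AA o2; AA o2; AA o4;
                       lam^-1 *: (AA o1 * AA o3)] a end.
Definition gS (i : 'I_3 + 'I_6) : F :=
  match i with inl v => EE v
  | inr a => nth 0 [:: AA o0 * AA o3; AA o0; AA o3; lam *: AA o1; AA o4;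
                       lam *: (AA o4 * AA o1)] a end.
Definition psi := ev gT.
Definition phi := ev gS.

Lemma psi_gen i : psi << fmu i >> = gT i. Proof. exact: ev_gen. Qed.
Lemma phi_gen i : phi << fmu i >> = gS i. Proof. exact: ev_gen. Qed.
Lemma psi_A a : psi (AA a) = gT (inr a). Proof. rewrite -AE. exact: ev_gen. Qed.
Lemma phi_A a : phi (AA a) = gS (inr a). Proof. rewrite -AE. exact: ev_gen. Qed.
Lemma psi_e v : psi (EE v) = EE v. Proof. transitivity (gT (inl v)) => //. rewrite -EEq. exact: ev_gen. Qed.
Lemma phi_e v : phi (EE v) = EE v. Proof. transitivity (gS (inl v)) => //. rewrite -EEq. exact: ev_gen. Qed.

Lemma HArF (k : K) (x y : F) : x * (k *: y) = k *: (x * y). Proof. exact: scalerAr'. Qed.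

Lemma psiB (x y : F) : psi (x - y) = psi x - psi y. Proof. exact: evB. Qed.
Lemma psiD (x y : F) : psi (x + y) = psi x + psi y. Proof. exact: evD. Qed.
Lemma psiM (x y : F) : psi (x * y) = psi x * psi y. Proof. exact: evM. Qed.
Lemma psiZ (k : K) (x : F) : psi (k *: x) = k *: psi x. Proof. exact: evZ. Qed.
Lemma psi0 : psi (0 : F) = 0. Proof. exact: ev0. Qed.
Lemma psi1 : psi (1 : F) = 1. Proof. exact: ev1. Qed.
Lemma psin n : psi (n%:R : F) = n%:R. Proof. exact: ev_nat. Qed.
Lemma phiB (x y : F) : phi (x - y) = phi x - phi y. Proof. exact: evB. Qed.
Lemma phiD (x y : F) : phi (x + y) = phi x + phi y. Proof. exact: evD. Qed.
Lemma phiM (x y : F) : phi (x * y) = phi x * phi y. Proof. exact: evM. Qed.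
Lemma phiZ (k : K) (x : F) : phi (k *: x) = k *: phi x. Proof. exact: evZ. Qed.
Lemma phi0 : phi (0 : F) = 0. Proof. exact: ev0. Qed.
Lemma phi1 : phi (1 : F) = 1. Proof. exact: ev1. Qed.
Lemma phin n : phi (n%:R : F) = n%:R. Proof. exact: ev_nat. Qed.

Lemma pA0 : psi (AA o0) = AA o1. Proof. exact: psi_A. Qed.
Lemma pA1 : psi (AA o1) = lam^-1 *: AA o3. Proof. exact: psi_A. Qed.
Lemma pA2 : psi (AA o2) = AA o4 * AA o2. Proof. exact: psi_A. Qed.
Lemma pA3 : psi (AA o3) = AA o2. Proof. exact: psi_A. Qed.
Lemma pA4 : psi (AA o4) = AA o4. Proof. exact: psi_A. Qed.
Lemma pA5 : psi (AA o5) = lam^-1 *: (AA o1 * AA o3). Proof. exact: psi_A. Qed.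
Lemma fA0 : phi (AA o0) = AA o0 * AA o3. Proof. exact: phi_A. Qed.
Lemma fA1 : phi (AA o1) = AA o0. Proof. exact: phi_A. Qed.
Lemma fA2 : phi (AA o2) = AA o3. Proof. exact: phi_A. Qed.
Lemma fA3 : phi (AA o3) = lam *: AA o1. Proof. exact: phi_A. Qed.
Lemma fA4 : phi (AA o4) = AA o4. Proof. exact: phi_A. Qed.
Lemma fA5 : phi (AA o5) = lam *: (AA o4 * AA o1). Proof. exact: phi_A. Qed.

Local Notation S := (PS lam).
Local Notation T := (PT mu).
Lemma SR0' : eqv S (AA o0 * AA o1) (lam *: (AA o1 * AA o3 * AA o4)). Proof. rewrite -AE; exact: SR0. Qed.
Lemma SR1' : eqv S (AA o1 * AA o2) (AA o0). Proof. rewrite -AE; exact: SR1. Qed.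
Lemma SR2' : eqv S (AA o2 * AA o0) (lam *: (AA o3 * AA o4 * AA o2)). Proof. rewrite -AE; exact: SR2. Qed.
Lemma SR3' : eqv S (AA o3 * AA o5) (lam *: (AA o2 * AA o1 * AA o3)). Proof. rewrite -AE; exact: SR3. Qed.
Lemma SR4' : eqv S (AA o4 * AA o3) (AA o5). Proof. rewrite -AE; exact: SR4. Qed.
Lemma SR5' : eqv S (AA o5 * AA o4) (lam *: (AA o4 * AA o2 * AA o1)). Proof. rewrite -AE; exact: SR5. Qed.
Lemma SZ3a' : eqv S (AA o0 * AA o1 * AA o3) 0. Proof. rewrite -AE; exact: SZ3a. Qed.
Lemma SZ3b' : eqv S (AA o2 * AA o0 * AA o0) 0. Proof. rewrite -AE; exact: SZ3b. Qed.
Lemma SZ3c' : eqv S (AA o5 * AA o4 * AA o2) 0. Proof. rewrite -AE; exact: SZ3c. Qed.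
Lemma SZ3d' : eqv S (AA o3 * AA o5 * AA o5) 0. Proof. rewrite -AE; exact: SZ3d. Qed.
Lemma SZ4a' : eqv S (AA o0 * AA o0 * AA o1) 0. Proof. rewrite -AE; exact: SZ4a. Qed.
Lemma SZ4b' : eqv S (AA o1 * AA o3 * AA o5) 0. Proof. rewrite -AE; exact: SZ4b. Qed.
Lemma SZ4c' : eqv S (AA o4 * AA o2 * AA o0) 0. Proof. rewrite -AE; exact: SZ4c. Qed.
Lemma SZ4d' : eqv S (AA o5 * AA o5 * AA o4) 0. Proof. rewrite -AE; exact: SZ4d. Qed.

Lemma TR0' : eqv T (AA o0 * AA o1) (AA o5). Proof. rewrite -AE; exact: TR0. Qed.
Lemma TR1' : eqv T (AA o1 * AA o2) (mu *: (AA o3 * AA o0 * AA o3)). Proof. rewrite -AE; exact: TR1. Qed.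
Lemma TR2' : eqv T (AA o2 * AA o0) (AA o4 * AA o1 * AA o4). Proof. rewrite -AE; exact: TR2. Qed.
Lemma TR3' : eqv T (AA o3 * AA o5) (AA o1 * AA o4 * AA o1). Proof. rewrite -AE; exact: TR3. Qed.
Lemma TR4' : eqv T (AA o4 * AA o3) (AA o2). Proof. rewrite -AE; exact: TR4. Qed.
Lemma TR5' : eqv T (AA o5 * AA o4) (mu *: (AA o0 * AA o3 * AA o0)). Proof. rewrite -AE; exact: TR5. Qed.
Lemma TZ3a' : eqv T (AA o1 * AA o2 * AA o5) 0. Proof. rewrite -AE; exact: TZ3a. Qed.
Lemma TZ3b' : eqv T (AA o2 * AA o0 * AA o3) 0. Proof. rewrite -AE; exact: TZ3b. Qed.
Lemma TZ3c' : eqv T (AA o3 * AA o5 * AA o2) 0. Proof. rewrite -AE; exact: TZ3c. Qed.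
Lemma TZ3d' : eqv T (AA o5 * AA o4 * AA o1) 0. Proof. rewrite -AE; exact: TZ3d. Qed.
Lemma TZ4a' : eqv T (AA o0 * AA o3 * AA o5) 0. Proof. rewrite -AE; exact: TZ4a. Qed.
Lemma TZ4b' : eqv T (AA o2 * AA o5 * AA o4) 0. Proof. rewrite -AE; exact: TZ4b. Qed.
Lemma TZ4c' : eqv T (AA o5 * AA o2 * AA o0) 0. Proof. rewrite -AE; exact: TZ4c. Qed.
Lemma TZ4d' : eqv T (AA o4 * AA o1 * AA o2) 0. Proof. rewrite -AE; exact: TZ4d. Qed.

Lemma LQsS a v : Ss a = v -> gen_ideal S (EE v * AA a - AA a).
Proof. by move=> <-; rewrite -AE -EEq; apply: relqs. Qed.
Lemma LQtS a v : St a = v -> gen_ideal S (AA a * EE v - AA a).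
Proof. by move=> <-; rewrite -AE -EEq; apply: relqt. Qed.
Lemma LQsT a v : Ts a = v -> gen_ideal T (EE v * AA a - AA a).
Proof. by move=> <-; rewrite -AE -EEq; apply: relqs. Qed.
Lemma LQtT a v : Tt a = v -> gen_ideal T (AA a * EE v - AA a).
Proof. by move=> <-; rewrite -AE -EEq; apply: relqt. Qed.

Lemma F_ind (Q : F -> Prop) : Q 0 -> (forall x y, Q x -> Q y -> Q (x + y)) ->
  (forall (k : K) x, Q x -> Q (k *: x)) -> (forall x y, Q x -> Q y -> Q (x * y)) ->
  Q 1 -> (forall v, Q (EE v)) -> (forall a, Q (AA a)) -> forall x, Q x.
Proof.
move=> Q0 QD QZ QM Q1 Qv Qa; apply: malg_ind => // [[v|a]].
- by move: (Qv v); rewrite -EEq.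
- by move: (Qa a); rewrite -AE.
Qed.


Lemma part1 x : gen_ideal T x -> gen_ideal S (psi x).
Proof.
elim=> {x} [r Hr | | x y _ Hx _ Hy | a x _ H | x a _ H].
- case: Hr => [Hq | [[a ->] | [[a [Hv ->]] | [a [Hv ->]]]]].
  + case: Hq => [[v [w ->]] | [-> | [[a ->] | [a ->]]]].
    * rewrite EEq; apply: (gvv psiB psiM psiD psi0 psi1 psin (psi_e v) (psi_e w)).
      rewrite -EEq; apply: gi_gen; left; left; by exists v, w.
    * rewrite EEq; apply: (gsum psiB psiM psiD psi0 psi1 psin psi_e).
      rewrite -EEq; by apply: gi_gen; left; right; left.
    * rewrite AE EEq; move: a; apply: ord6P.
      -- apply: (gQs psiB psiM psiD psi0 psi1 psin (psi_e _) pA0); exact: LQsS.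
      -- apply: (gQs psiB psiM psiD psi0 psi1 psin (psi_e _) pA1).
         apply: (Jss HArF); exact: LQsS.
      -- apply: (gQs psiB psiM psiD psi0 psi1 psin (psi_e _) pA2).
         apply: Jsp; exact: LQsS.
      -- apply: (gQs psiB psiM psiD psi0 psi1 psin (psi_e _) pA3); exact: LQsS.
      -- apply: (gQs psiB psiM psiD psi0 psi1 psin (psi_e _) pA4); exact: LQsS.
      -- apply: (gQs psiB psiM psiD psi0 psi1 psin (psi_e _) pA5).
         apply: (Jss HArF); apply: Jsp; exact: LQsS.
    * rewrite AE EEq; move: a; apply: ord6P.
      -- apply: (gQt psiB psiM psiD psi0 psi1 psin (psi_e _) pA0); exact: LQtS.
      -- apply: (gQt psiB psiM psiD psi0 psi1 psin (psi_e _) pA1).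
         apply: Jts; exact: LQtS.
      -- apply: (gQt psiB psiM psiD psi0 psi1 psin (psi_e _) pA2).
         apply: Jtp; exact: LQtS.
      -- apply: (gQt psiB psiM psiD psi0 psi1 psin (psi_e _) pA3); exact: LQtS.
      -- apply: (gQt psiB psiM psiD psi0 psi1 psin (psi_e _) pA4); exact: LQtS.
      -- apply: (gQt psiB psiM psiD psi0 psi1 psin (psi_e _) pA5).
         apply: Jts; apply: Jtp; exact: LQtS.
  + rewrite TbarE; move: a; apply: ord6P.
    * rewrite T2_0 AE; exact: (mT2_0 HArF Hl psiB psiM psiZ pA0 pA1 pA2 pA3 pA4 pA5 SR0' SR1' SR2' SR3' SR4' SR5' SZ3a' SZ3b' SZ3c' SZ3d' SZ4a' SZ4b' SZ4c' SZ4d').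
    * rewrite T2_1 AE; exact: (mT2_1 HArF Hl psiB psiM psiZ pA0 pA1 pA2 pA3 pA4 pA5 SR0' SR1' SR2' SR3' SR4' SR5' SZ3a' SZ3b' SZ3c' SZ3d' SZ4a' SZ4b' SZ4c' SZ4d').
    * rewrite T2_2 AE; exact: (mT2_2 HArF Hl psiB psiM psiZ pA0 pA1 pA2 pA3 pA4 pA5 SR0' SR1' SR2' SR3' SR4' SR5' SZ3a' SZ3b' SZ3c' SZ3d' SZ4a' SZ4b' SZ4c' SZ4d').
    * rewrite T2_3 AE; exact: (mT2_3 HArF Hl psiB psiM psiZ pA0 pA1 pA2 pA3 pA4 pA5 SR0' SR1' SR2' SR3' SR4' SR5' SZ3a' SZ3b' SZ3c' SZ3d' SZ4a' SZ4b' SZ4c' SZ4d').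
    * rewrite T2_4 AE; exact: (mT2_4 HArF Hl psiB psiM psiZ pA0 pA1 pA2 pA3 pA4 pA5 SR0' SR1' SR2' SR3' SR4' SR5' SZ3a' SZ3b' SZ3c' SZ3d' SZ4a' SZ4b' SZ4c' SZ4d').
    * rewrite T2_5 AE; exact: (mT2_5 HArF Hl psiB psiM psiZ pA0 pA1 pA2 pA3 pA4 pA5 SR0' SR1' SR2' SR3' SR4' SR5' SZ3a' SZ3b' SZ3c' SZ3d' SZ4a' SZ4b' SZ4c' SZ4d').
  + move: a Hv; apply: ord6P => Hv.
    * by rewrite Tv3_0 in Hv.
    * rewrite T3_1 AE; exact: (mT3_1 HArF Hl psiB psiM psiZ pA0 pA1 pA2 pA3 pA4 pA5 SR0' SR1' SR2' SR3' SR4' SR5' SZ3a' SZ3b' SZ3c' SZ3d' SZ4a' SZ4b' SZ4c' SZ4d').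
    * rewrite T3_2 AE; exact: (mT3_2 HArF Hl psiB psiM psiZ pA0 pA1 pA2 pA3 pA4 pA5 SR0' SR1' SR2' SR3' SR4' SR5' SZ3a' SZ3b' SZ3c' SZ3d' SZ4a' SZ4b' SZ4c' SZ4d').
    * rewrite T3_3 AE; exact: (mT3_3 HArF Hl psiB psiM psiZ pA0 pA1 pA2 pA3 pA4 pA5 SR0' SR1' SR2' SR3' SR4' SR5' SZ3a' SZ3b' SZ3c' SZ3d' SZ4a' SZ4b' SZ4c' SZ4d').
    * by rewrite Tv3_4 in Hv.
    * rewrite T3_5 AE; exact: (mT3_5 HArF Hl psiB psiM psiZ pA0 pA1 pA2 pA3 pA4 pA5 SR0' SR1' SR2' SR3' SR4' SR5' SZ3a' SZ3b' SZ3c' SZ3d' SZ4a' SZ4b' SZ4c' SZ4d').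
  + move: a Hv; apply: ord6P => Hv.
    * rewrite T4_0 AE; exact: (mT4_0 HArF Hl psiB psiM psiZ pA0 pA1 pA2 pA3 pA4 pA5 SR0' SR1' SR2' SR3' SR4' SR5' SZ3a' SZ3b' SZ3c' SZ3d' SZ4a' SZ4b' SZ4c' SZ4d').
    * by rewrite Tv4_1 in Hv.
    * rewrite T4_2 AE; exact: (mT4_2 HArF Hl psiB psiM psiZ pA0 pA1 pA2 pA3 pA4 pA5 SR0' SR1' SR2' SR3' SR4' SR5' SZ3a' SZ3b' SZ3c' SZ3d' SZ4a' SZ4b' SZ4c' SZ4d').
    * by rewrite Tv4_3 in Hv.
    * rewrite T4_4 AE; exact: (mT4_4 HArF Hl psiB psiM psiZ pA0 pA1 pA2 pA3 pA4 pA5 SR0' SR1' SR2' SR3' SR4' SR5' SZ3a' SZ3b' SZ3c' SZ3d' SZ4a' SZ4b' SZ4c' SZ4d').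
    * rewrite T4_5 AE; exact: (mT4_5 HArF Hl psiB psiM psiZ pA0 pA1 pA2 pA3 pA4 pA5 SR0' SR1' SR2' SR3' SR4' SR5' SZ3a' SZ3b' SZ3c' SZ3d' SZ4a' SZ4b' SZ4c' SZ4d').
- by rewrite psi0; apply: gi_0.
- by rewrite psiD; apply: gi_add.
- by rewrite psiM; apply: gi_mull.
- by rewrite psiM; apply: gi_mulr.
Qed.

Lemma part2 x : gen_ideal S x -> gen_ideal T (phi x).
Proof.
elim=> {x} [r Hr | | x y _ Hx _ Hy | a x _ H | x a _ H].
- case: Hr => [Hq | [[a ->] | [[a [Hv ->]] | [a [Hv ->]]]]].
  + case: Hq => [[v [w ->]] | [-> | [[a ->] | [a ->]]]].
    * rewrite EEq; apply: (gvv phiB phiM phiD phi0 phi1 phin (phi_e v) (phi_e w)).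
      rewrite -EEq; apply: gi_gen; left; left; by exists v, w.
    * rewrite EEq; apply: (gsum phiB phiM phiD phi0 phi1 phin phi_e).
      rewrite -EEq; by apply: gi_gen; left; right; left.
    * rewrite AE EEq; move: a; apply: ord6P.
      -- apply: (gQs phiB phiM phiD phi0 phi1 phin (phi_e _) fA0).
         apply: Jsp; exact: LQsT.
      -- apply: (gQs phiB phiM phiD phi0 phi1 phin (phi_e _) fA1); exact: LQsT.
      -- apply: (gQs phiB phiM phiD phi0 phi1 phin (phi_e _) fA2); exact: LQsT.
      -- apply: (gQs phiB phiM phiD phi0 phi1 phin (phi_e _) fA3).
         apply: (Jss HArF); exact: LQsT.
      -- apply: (gQs phiB phiM phiD phi0 phi1 phin (phi_e _) fA4); exact: LQsT.
      -- apply: (gQs phiB phiM phiD phi0 phi1 phin (phi_e _) fA5).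
         apply: (Jss HArF); apply: Jsp; exact: LQsT.
    * rewrite AE EEq; move: a; apply: ord6P.
      -- apply: (gQt phiB phiM phiD phi0 phi1 phin (phi_e _) fA0).
         apply: Jtp; exact: LQtT.
      -- apply: (gQt phiB phiM phiD phi0 phi1 phin (phi_e _) fA1); exact: LQtT.
      -- apply: (gQt phiB phiM phiD phi0 phi1 phin (phi_e _) fA2); exact: LQtT.
      -- apply: (gQt phiB phiM phiD phi0 phi1 phin (phi_e _) fA3).
         apply: Jts; exact: LQtT.
      -- apply: (gQt phiB phiM phiD phi0 phi1 phin (phi_e _) fA4); exact: LQtT.
      -- apply: (gQt phiB phiM phiD phi0 phi1 phin (phi_e _) fA5).
         apply: Jts; apply: Jtp; exact: LQtT.
  + rewrite SbarE; move: a; apply: ord6P.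
    * rewrite S2_0 AE; exact: (mS2_0 HArF Hl phiB phiM phiZ fA0 fA1 fA2 fA3 fA4 fA5 TR0' TR1' TR2' TR3' TR4' TR5' TZ3a' TZ3b' TZ3c' TZ3d' TZ4a' TZ4b' TZ4c' TZ4d').
    * rewrite S2_1 AE; exact: (mS2_1 HArF Hl phiB phiM phiZ fA0 fA1 fA2 fA3 fA4 fA5 TR0' TR1' TR2' TR3' TR4' TR5' TZ3a' TZ3b' TZ3c' TZ3d' TZ4a' TZ4b' TZ4c' TZ4d').
    * rewrite S2_2 AE; exact: (mS2_2 HArF Hl phiB phiM phiZ fA0 fA1 fA2 fA3 fA4 fA5 TR0' TR1' TR2' TR3' TR4' TR5' TZ3a' TZ3b' TZ3c' TZ3d' TZ4a' TZ4b' TZ4c' TZ4d').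
    * rewrite S2_3 AE; exact: (mS2_3 HArF Hl phiB phiM phiZ fA0 fA1 fA2 fA3 fA4 fA5 TR0' TR1' TR2' TR3' TR4' TR5' TZ3a' TZ3b' TZ3c' TZ3d' TZ4a' TZ4b' TZ4c' TZ4d').
    * rewrite S2_4 AE; exact: (mS2_4 HArF Hl phiB phiM phiZ fA0 fA1 fA2 fA3 fA4 fA5 TR0' TR1' TR2' TR3' TR4' TR5' TZ3a' TZ3b' TZ3c' TZ3d' TZ4a' TZ4b' TZ4c' TZ4d').
    * rewrite S2_5 AE; exact: (mS2_5 HArF Hl phiB phiM phiZ fA0 fA1 fA2 fA3 fA4 fA5 TR0' TR1' TR2' TR3' TR4' TR5' TZ3a' TZ3b' TZ3c' TZ3d' TZ4a' TZ4b' TZ4c' TZ4d').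
  + move: a Hv; apply: ord6P => Hv.
    * rewrite S3_0 AE; exact: (mS3_0 HArF Hl phiB phiM phiZ fA0 fA1 fA2 fA3 fA4 fA5 TR0' TR1' TR2' TR3' TR4' TR5' TZ3a' TZ3b' TZ3c' TZ3d' TZ4a' TZ4b' TZ4c' TZ4d').
    * by rewrite Sv3_1 in Hv.
    * rewrite S3_2 AE; exact: (mS3_2 HArF Hl phiB phiM phiZ fA0 fA1 fA2 fA3 fA4 fA5 TR0' TR1' TR2' TR3' TR4' TR5' TZ3a' TZ3b' TZ3c' TZ3d' TZ4a' TZ4b' TZ4c' TZ4d').
    * rewrite S3_3 AE; exact: (mS3_3 HArF Hl phiB phiM phiZ fA0 fA1 fA2 fA3 fA4 fA5 TR0' TR1' TR2' TR3' TR4' TR5' TZ3a' TZ3b' TZ3c' TZ3d' TZ4a' TZ4b' TZ4c' TZ4d').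
    * by rewrite Sv3_4 in Hv.
    * rewrite S3_5 AE; exact: (mS3_5 HArF Hl phiB phiM phiZ fA0 fA1 fA2 fA3 fA4 fA5 TR0' TR1' TR2' TR3' TR4' TR5' TZ3a' TZ3b' TZ3c' TZ3d' TZ4a' TZ4b' TZ4c' TZ4d').
  + move: a Hv; apply: ord6P => Hv.
    * rewrite S4_0 AE; exact: (mS4_0 HArF Hl phiB phiM phiZ fA0 fA1 fA2 fA3 fA4 fA5 TR0' TR1' TR2' TR3' TR4' TR5' TZ3a' TZ3b' TZ3c' TZ3d' TZ4a' TZ4b' TZ4c' TZ4d').
    * rewrite S4_1 AE; exact: (mS4_1 HArF Hl phiB phiM phiZ fA0 fA1 fA2 fA3 fA4 fA5 TR0' TR1' TR2' TR3' TR4' TR5' TZ3a' TZ3b' TZ3c' TZ3d' TZ4a' TZ4b' TZ4c' TZ4d').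
    * by rewrite Sv4_2 in Hv.
    * by rewrite Sv4_3 in Hv.
    * rewrite S4_4 AE; exact: (mS4_4 HArF Hl phiB phiM phiZ fA0 fA1 fA2 fA3 fA4 fA5 TR0' TR1' TR2' TR3' TR4' TR5' TZ3a' TZ3b' TZ3c' TZ3d' TZ4a' TZ4b' TZ4c' TZ4d').
    * rewrite S4_5 AE; exact: (mS4_5 HArF Hl phiB phiM phiZ fA0 fA1 fA2 fA3 fA4 fA5 TR0' TR1' TR2' TR3' TR4' TR5' TZ3a' TZ3b' TZ3c' TZ3d' TZ4a' TZ4b' TZ4c' TZ4d').
- by rewrite phi0; apply: gi_0.
- by rewrite phiD; apply: gi_add.
- by rewrite phiM; apply: gi_mull.
- by rewrite phiM; apply: gi_mulr.
Qed.

Lemma part3 x : gen_ideal T (phi (psi x) - x).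
Proof.
move: x; apply: F_ind.
- by rewrite psi0 phi0 subrr; apply: gi_0.
- move=> x y Hx Hy; apply: (@Qadd _ _ _ (fun z => phi (psi z)) x y _ Hx Hy).
  by rewrite /= psiD phiD.
- move=> k x Hx; apply: (@Qscale _ _ _ (fun z => phi (psi z)) k x _ Hx).
  by rewrite /= psiZ phiZ.
- move=> x y Hx Hy; apply: (@Qmul _ _ _ (fun z => phi (psi z)) x y _ Hx Hy).
  by rewrite /= psiM phiM.
- by rewrite psi1 phi1 subrr; apply: gi_0.
- move=> v; cbv beta; exact: (rt_id _ HArF phiM phiZ (psi_e v) (phi_e v)).
- apply: ord6P; cbv beta.
  + exact: (rt_id _ HArF phiM phiZ pA0 fA1).
  + exact: (rt_sc _ HArF phiM phiZ pA1 fA3 (mulVf Hl)).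
  + exact: (rt_prod HArF phiM phiZ pA2 fA4 fA2 TR4').
  + exact: (rt_id _ HArF phiM phiZ pA3 fA2).
  + exact: (rt_id _ HArF phiM phiZ pA4 fA4).
  + exact: (rt_scprod HArF phiM phiZ pA5 fA1 fA3 (mulVf Hl) TR0').
Qed.

Lemma part4 x : gen_ideal S (psi (phi x) - x).
Proof.
move: x; apply: F_ind.
- by rewrite phi0 psi0 subrr; apply: gi_0.
- move=> x y Hx Hy; apply: (@Qadd _ _ _ (fun z => psi (phi z)) x y _ Hx Hy).
  by rewrite /= phiD psiD.
- move=> k x Hx; apply: (@Qscale _ _ _ (fun z => psi (phi z)) k x _ Hx).
  by rewrite /= phiZ psiZ.
- move=> x y Hx Hy; apply: (@Qmul _ _ _ (fun z => psi (phi z)) x y _ Hx Hy).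
  by rewrite /= phiM psiM.
- by rewrite phi1 psi1 subrr; apply: gi_0.
- move=> v; cbv beta; exact: (rt_id _ HArF psiM psiZ (phi_e v) (psi_e v)).
- apply: ord6P; cbv beta.
  + exact: (rt_prod HArF psiM psiZ fA0 pA0 pA3 SR1').
  + exact: (rt_id _ HArF psiM psiZ fA1 pA0).
  + exact: (rt_id _ HArF psiM psiZ fA2 pA3).
  + exact: (rt_sc _ HArF psiM psiZ fA3 pA1 (mulfV Hl)).
  + exact: (rt_id _ HArF psiM psiZ fA4 pA4).
  + exact: (rt_scprod HArF psiM psiZ fA5 pA4 pA1 (mulfV Hl) SR4').
Qed.
End Main.

Lemma eS_ (K : fieldType) (lam : K) : S_ideal lam = wsa_ideal Ss St Sf S_m (S_c lam).
Proof. by rewrite /S_ideal SsE StE SfE. Qed.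
Lemma eT_ (K : fieldType) (mu : K) : T_ideal mu = wsa_ideal Ts Tt Tf T_m (T_c mu).
Proof. by rewrite /T_ideal TsE TtE TfE. Qed.

Theorem lemma3p5 (K : closedFieldType) (lam : K) :
  lam != 0 ->
  quot_alg_iso (T_ideal (lam ^-2)) (S_ideal lam).
Proof.
move=> Hl.
rewrite eT_ eS_.
exists (evL (gT lam)), (evL (gS lam)); split.
- move=> x Hx. exact: (part1 Hl Hx).
- move=> y Hy. exact: (part2 Hl Hy).
- move=> x. exact: (part3 Hl x).
- move=> y. exact: (part4 Hl y).
Qed.
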